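(* Let $F$ be a connected compact simple Lie group, $m\ge 2$, and consider the $F^m$-invariant metric on $F^m/\mathrm{diag}(F)$ defined by the inner product $(\cdot,\cdot)$ on $\mathfrak g_m=\mathfrak f\oplus\cdots\oplus\mathfrak f\oplus 0$ given by $\big((x_1,\dots,x_{m-1},0)\otimes Z,(x_1,\dots,x_{m-1},0)\otimes Z\big)=f(x_1,\dots,x_{m-1})\langle Z,Z\rangle$ for all $x_i\in\mathbb R$, $Z\in\mathfrak f$, where $f(x)=\sum_{i,j=1}^{m-1}a_{ij}x_ix_j$ ($a_{ij}=a_{ji}$) is a positive definite quadratic form. The metric is naturally reductive if and only if one of the following holds: (a) $a_{ii}>0$ for all $i$ and $a_{ij}=0$ for $i\neq j$; (b) there is $k\in\{1,\dots,m-1\}$ such that $-a_{ik}=a_{ii}>0$ for all $i\neq k$, $a_{ij}=0$ whenever $i,j,k$ are pairwise distinct, and $a_{kk}>\sum_{i\neq k}a_{ii}$; (c) $a_{ij}=\delta_{ij}\alpha_i-\frac{\alpha_i\alpha_j}{S}$ for $i,j=1,\dots,m-1$, where $\alpha_1,\dots,\alpha_m\in\mathbb R\setminus\{0\}$, $S=\sum_{i=1}^m\alpha_i$, and either $\alpha_i>0$ for all $i=1,\dots,m$, or exactly one $\alpha_i$ is negative and $S<0$.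
   Context: $F$ is a connected compact simple Lie group with Lie algebra $\mathfrak f$; $\mathfrak g=m\mathfrak f$, $\mathfrak h=\mathrm{diag}(\mathfrak f)$. $\langle\cdot,\cdot\rangle$ is minus the Killing form. For $a=(a_1,\dots,a_m)\in\mathbb R^m$ and $X\in\mathfrak f$, $a\otimes X$ denotes $(a_1X,\dots,a_mX)\in\mathfrak g$. $\mathfrak g_m$ is the ideal of $\mathfrak g$ with zero in the last copy of $\mathfrak f$; it is an $\mathrm{Ad}(\mathrm{diag}(F))$-invariant complement of $\mathfrak h$, and $F^m$-invariant metrics on $F^m/\mathrm{diag}(F)$ correspond to $\mathrm{Ad}(\mathrm{diag}(F))$-invariant inner products on it. A metric is naturally reductive if some $\mathrm{Ad}(H)$-invariant complement $\mathfrak p$ of $\mathfrak h$ and the corresponding inner product $(\cdot,\cdot)$ on $\mathfrak p$ satisfy $([X,Y]_{\mathfrak p},X)=0$ for all $X,Y\in\mathfrak p$. *)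

(* Defs.v *)
From HB Require Import structures.
From mathcomp Require Import all_boot all_order all_algebra.
Set Implicit Arguments. Unset Strict Implicit. Unset Printing Implicit Defensive.
Import Order.TTheory GRing.Theory Num.Theory.
Local Open Scope ring_scope.

Definition is_lie_bracket (R : nzRingType) {n : nat}
    (br : 'rV[R]_n -> 'rV[R]_n -> 'rV[R]_n) : Prop :=
  [/\ (forall (c : R) X Y Z, br (c *: X + Y) Z = c *: br X Z + br Y Z),
      (forall (c : R) X Y Z, br Z (c *: X + Y) = c *: br Z X + br Z Y),
      (forall X, br X X = 0) &
      (forall X Y Z, br X (br Y Z) + br Y (br Z X) + br Z (br X Y) = 0)].

(* ad X as a matrix (acting on row vectors on the right). *)
Definition ad_mx (R : nzRingType) {n : nat} (br : 'rV[R]_n -> 'rV[R]_n -> 'rV[R]_n)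
    (X : 'rV[R]_n) : 'M[R]_n := lin1_mx (br X).

Definition killing (R : comNzRingType) {n : nat} (br : 'rV[R]_n -> 'rV[R]_n -> 'rV[R]_n)
    (X Y : 'rV[R]_n) : R := \tr (ad_mx br X *m ad_mx br Y).

(* <.,.> = minus the Killing form. *)
Definition kform (R : comNzRingType) {n : nat} (br : 'rV[R]_n -> 'rV[R]_n -> 'rV[R]_n)
    (X Y : 'rV[R]_n) : R := - killing br X Y.

Definition simple_lie (R : fieldType) {n : nat} (br : 'rV[R]_n -> 'rV[R]_n -> 'rV[R]_n) : Prop :=
  is_lie_bracket br /\
  (exists X Y, br X Y != 0) /\
  (forall U : 'M[R]_n,
     (forall X Y : 'rV[R]_n, (X <= U)%MS -> (br X Y <= U)%MS) ->
     \rank U = 0%N \/ \rank U = n).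

(* f is a compact simple Lie algebra (Lie algebra of a connected compact simple
   Lie group): simple with negative definite Killing form. *)
Definition compact_simple_lie (R : realFieldType) {n : nat}
    (br : 'rV[R]_n -> 'rV[R]_n -> 'rV[R]_n) : Prop :=
  simple_lie br /\ (forall X, X != 0 -> killing br X X < 0).

(* g = m f with m = k.+1, modelled as 'M_(k.+1, n): row i is the i-th component. *)
Definition brg (R : nzRingType) {k n : nat} (br : 'rV[R]_n -> 'rV[R]_n -> 'rV[R]_n)
    (X Y : 'M[R]_(k.+1, n)) : 'M[R]_(k.+1, n) :=
  \matrix_(i < k.+1) br (row i X) (row i Y).

Definition tens (R : nzRingType) {k n : nat} (a : 'rV[R]_k.+1) (Z : 'rV[R]_n)
  : 'M[R]_(k.+1, n) := a^T *m Z.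

Definition diagm (R : nzRingType) {k n : nat} (Z : 'rV[R]_n) : 'M[R]_(k.+1, n) :=
  tens (const_mx 1) Z.

Definition in_h (R : nzRingType) {k n : nat} (X : 'M[R]_(k.+1, n)) : Prop :=
  exists Z, X = diagm Z.

Definition in_gm (R : nzRingType) {k n : nat} (X : 'M[R]_(k.+1, n)) : Prop :=
  row ord_max X = 0.

(* projection g -> g_m along h (identifies g/h, and any complement p, with g_m) *)
Definition proj_gm (R : nzRingType) {k n : nat} (X : 'M[R]_(k.+1, n)) : 'M[R]_(k.+1, n) :=
  X - diagm (row ord_max X).

Definition wid (k : nat) (i : 'I_k) : 'I_k.+1 := widen_ord (leqnSn k) i.

(* The Ad(diag F)-invariant inner product on g_m determined by the quadratic
   form f(x) = sum a_ij x_i x_j:  ((x (x) Z),(y (x) W)) = (sum a_ij x_i y_j) <Z,W>. *)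
Definition ipg (R : comNzRingType) {k n : nat} (br : 'rV[R]_n -> 'rV[R]_n -> 'rV[R]_n)
    (a : 'M[R]_k) (X Y : 'M[R]_(k.+1, n)) : R :=
  \sum_(i < k) \sum_(j < k) a i j * kform br (row (wid i) X) (row (wid j) Y).

Definition is_subspace (R : nzRingType) {k n : nat} (P : 'M[R]_(k.+1, n) -> Prop) : Prop :=
  P 0 /\ (forall (c : R) X Y, P X -> P Y -> P (c *: X + Y)).

(* Naturally reductive: there is an ad(h)- (equivalently Ad(H)-, H = diag F
   connected) invariant complement p of h in g such that, with the inner
   product (U,V)_p := (proj U, proj V) transported from g_m, one has
   ([X,Y]_p, X)_p = 0 for all X, Y in p. *)
Definition naturally_reductive (R : comNzRingType) {k n : nat}
    (br : 'rV[R]_n -> 'rV[R]_n -> 'rV[R]_n) (a : 'M[R]_k) : Prop :=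
  exists P : 'M[R]_(k.+1, n) -> Prop,
    [/\ is_subspace P,
        (forall X, P X -> in_h X -> X = 0),
        (forall X, exists U W, [/\ P U, in_h W & X = U + W]),
        (forall W U, in_h W -> P U -> P (brg br W U)) &
        (forall X Y U W, P X -> P Y -> P U -> in_h W -> brg br X Y = U + W ->
           ipg br a (proj_gm U) (proj_gm X) = 0)].

Definition posdef_sym (R : realFieldType) {k : nat} (a : 'M[R]_k) : Prop :=
  a^T = a /\ (forall x : 'rV[R]_k, x != 0 -> 0 < (x *m a *m x^T) 0 0).

Definition cond_a (R : realFieldType) {k : nat} (a : 'M[R]_k) : Prop :=
  (forall i, 0 < a i i) /\ (forall i j, i != j -> a i j = 0).

Definition cond_b (R : realFieldType) {k : nat} (a : 'M[R]_k) : Prop :=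
  exists kk : 'I_k,
    [/\ (forall i, i != kk -> - a i kk = a i i /\ 0 < a i i),
        (forall i j, i != j -> i != kk -> j != kk -> a i j = 0) &
        \sum_(i < k | i != kk) a i i < a kk kk].

Definition cond_c (R : realFieldType) {k : nat} (a : 'M[R]_k) : Prop :=
  exists alpha : 'I_k.+1 -> R,
    let S := \sum_(i < k.+1) alpha i in
    [/\ (forall i, alpha i != 0),
        (forall i j : 'I_k,
           a i j = (i == j)%:R * alpha (wid i) - alpha (wid i) * alpha (wid j) / S) &
        ((forall i, 0 < alpha i) \/
         ((exists i0, alpha i0 < 0 /\ (forall j, alpha j < 0 -> j = i0)) /\ S < 0))].

(* Main.v *)
Require Import Defs.
From HB Require Import structures.
From mathcomp Require Import all_boot all_order all_algebra ring lra.
From Stdlib Require Import ClassicalEpsilon.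
Import Order.TTheory GRing.Theory Num.Theory.
Local Open Scope ring_scope.
Set Implicit Arguments. Unset Strict Implicit. Unset Printing Implicit Defensive.

Lemma lin_add (R : nzRingType) m n (f : 'rV[R]_m -> 'rV[R]_n) :
  (forall (c : R) x y, f (c *: x + y) = c *: f x + f y) ->
  (forall x y, f (x + y) = f x + f y) /\ f 0 = 0 /\ (forall c x, f (c *: x) = c *: f x).
Proof.
move=> H.
have fD : forall x y, f (x + y) = f x + f y by move=> x y; rewrite -[x]scale1r H !scale1r.
have f0 : f 0 = 0.
  by apply/eqP; have := fD 0 0; rewrite addr0 => /(congr1 (fun v => v - f 0)); rewrite addrK subrr => <-.
split; first exact: fD. split; first exact: f0.
by move=> c x; rewrite -[c *: x]addr0 H f0 addr0.
Qed.

Lemma lin_sum (R : nzRingType) m n (f : 'rV[R]_m -> 'rV[R]_n) (I : Type) (s : seq I)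
  (P : pred I) (F : I -> 'rV[R]_m) :
  (forall (c : R) x y, f (c *: x + y) = c *: f x + f y) ->
  f (\sum_(i <- s | P i) F i) = \sum_(i <- s | P i) f (F i).
Proof.
move=> /lin_add [fD [f0 _]].
exact: (big_morph f fD f0).
Qed.

Lemma mul_lin1 (R : comNzRingType) m n (f : 'rV[R]_m -> 'rV[R]_n) u :
  (forall (c : R) x y, f (c *: x + y) = c *: f x + f y) ->
  u *m lin1_mx f = f u.
Proof.
move=> Hf; have [fD [f0 fZ]] := lin_add Hf.
rewrite mulmx_sum_row {2}(row_sum_delta u) (lin_sum _ _ _ Hf).
apply: eq_bigr => i _; rewrite fZ; congr (_ *: _).
by apply/rowP=> j; rewrite !mxE.
Qed.



Lemma brL (R : nzRingType) n (br : 'rV[R]_n -> 'rV[R]_n -> 'rV[R]_n) :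
  is_lie_bracket br ->
  [/\ (forall X Y Z, br (X + Y) Z = br X Z + br Y Z),
      (forall X Y Z, br Z (X + Y) = br Z X + br Z Y),
      (forall c X Y, br (c *: X) Y = c *: br X Y),
      (forall c X Y, br Y (c *: X) = c *: br Y X) &
      (forall X Y, br X Y = - br Y X)].
Proof.
case=> Hl Hr Hxx _.
have [Dl [l0 Zl]] : (forall X Y Z, br (X + Y) Z = br X Z + br Y Z) /\ (forall Z, br 0 Z = 0)
   /\ (forall c X Y, br (c *: X) Y = c *: br X Y).
  have H := fun Z => lin_add (fun c x y => Hl c x y Z).
  split; first by move=> X Y Z; case: (H Z).
  split; first by move=> Z; case: (H Z) => _ [].
  by move=> c X Y; case: (H Y) => _ [].
have [Dr Zr] : (forall X Y Z, br Z (X + Y) = br Z X + br Z Y)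
   /\ (forall c X Y, br Y (c *: X) = c *: br Y X).
  have H := fun Z => lin_add (fun c x y => Hr c x y Z).
  split; first by move=> X Y Z; case: (H Z).
  by move=> c X Y; case: (H Y) => _ [].
split=> // X Y.
have := Hxx (X + Y); rewrite Dl !Dr !Hxx add0r addr0.
by move/eqP; rewrite addr_eq0 => /eqP.
Qed.

Lemma adE (R : comNzRingType) n (br : 'rV[R]_n -> 'rV[R]_n -> 'rV[R]_n) X u :
  is_lie_bracket br -> u *m ad_mx br X = br X u.
Proof. by case=> _ Hr _ _; rewrite /ad_mx mul_lin1 // => c x y; rewrite Hr. Qed.

Lemma mx_ext (R : comNzRingType) m n (A B : 'M[R]_(m, n)) :
  (forall u : 'rV_m, u *m A = u *m B) -> A = B.
Proof. by move=> H; apply/row_matrixP=> i; rewrite !rowE H. Qed.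

Lemma adL (R : comNzRingType) n (br : 'rV[R]_n -> 'rV[R]_n -> 'rV[R]_n) c X Y :
  is_lie_bracket br -> ad_mx br (c *: X + Y) = c *: ad_mx br X + ad_mx br Y.
Proof.
move=> Hb; apply: mx_ext => u.
by rewrite mulmxDr -scalemxAr !adE //; case: Hb => Hl _ _ _; rewrite Hl.
Qed.

Lemma ad_br (R : comNzRingType) n (br : 'rV[R]_n -> 'rV[R]_n -> 'rV[R]_n) X Y :
  is_lie_bracket br -> ad_mx br (br X Y) = ad_mx br Y *m ad_mx br X - ad_mx br X *m ad_mx br Y.
Proof.
move=> Hb; apply: mx_ext => u.
rewrite mulmxBr !mulmxA !adE //.
have [Dl Dr Zl Zr N] := brL Hb.
have NR : forall Y v, br Y (- v) = - br Y v by move=> Y0 v; rewrite -scaleN1r Zr scaleN1r.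
case: Hb => _ _ _ J.
have := J X Y u; rewrite (N u (br X Y)) (N u X) NR.
move=> H; apply/eqP; rewrite eq_sym subr_eq -subr_eq0; apply/eqP; rewrite -H.
by rewrite opprD addrA addrAC.
Qed.

Lemma killingC (R : comNzRingType) n (br : 'rV[R]_n -> 'rV[R]_n -> 'rV[R]_n) X Y :
  killing br X Y = killing br Y X.
Proof. by rewrite /killing mxtrace_mulC. Qed.

Lemma killingL (R : comNzRingType) n (br : 'rV[R]_n -> 'rV[R]_n -> 'rV[R]_n) c X Y Z :
  is_lie_bracket br -> killing br (c *: X + Y) Z = c * killing br X Z + killing br Y Z.
Proof. by move=> Hb; rewrite /killing adL // mulmxDl -scalemxAl mxtraceD mxtraceZ. Qed.

Lemma killing_inv (R : comNzRingType) n (br : 'rV[R]_n -> 'rV[R]_n -> 'rV[R]_n) X Y Z :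
  is_lie_bracket br -> killing br (br X Y) Z = killing br X (br Y Z).
Proof.
move=> Hb; rewrite /killing !ad_br // mulmxBl mulmxBr !linearB /= -!mulmxA.
by rewrite (mxtrace_mulC (ad_mx br Y)) -!mulmxA.
Qed.

Definition kf (R : comNzRingType) n (br : 'rV[R]_n -> 'rV[R]_n -> 'rV[R]_n) := kform br.

Lemma kformC (R : comNzRingType) n (br : 'rV[R]_n -> 'rV[R]_n -> 'rV[R]_n) X Y :
  kform br X Y = kform br Y X.
Proof. by rewrite /kform killingC. Qed.

Lemma kformL (R : comNzRingType) n (br : 'rV[R]_n -> 'rV[R]_n -> 'rV[R]_n) c X Y Z :
  is_lie_bracket br -> kform br (c *: X + Y) Z = c * kform br X Z + kform br Y Z.
Proof. by move=> Hb; rewrite /kform killingL // opprD mulrN. Qed.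

Lemma kformR (R : comNzRingType) n (br : 'rV[R]_n -> 'rV[R]_n -> 'rV[R]_n) c X Y Z :
  is_lie_bracket br -> kform br Z (c *: X + Y) = c * kform br Z X + kform br Z Y.
Proof. by move=> Hb; rewrite !(kformC _ Z) kformL. Qed.

Lemma kform_inv (R : comNzRingType) n (br : 'rV[R]_n -> 'rV[R]_n -> 'rV[R]_n) X Y Z :
  is_lie_bracket br -> kform br (br X Y) Z = kform br X (br Y Z).
Proof. by move=> Hb; rewrite /kform killing_inv. Qed.

Lemma scal_lin_sum (R : nzRingType) m (g : 'rV[R]_m -> R) (I : Type) (s : seq I)
  (P : pred I) (F : I -> 'rV[R]_m) :
  (forall (c : R) x y, g (c *: x + y) = c * g x + g y) ->
  g (\sum_(i <- s | P i) F i) = \sum_(i <- s | P i) g (F i).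
Proof.
move=> H.
have gD : forall x y, g (x + y) = g x + g y by move=> x y; rewrite -[x]scale1r H mul1r scale1r.
have g0 : g 0 = 0.
  by apply/eqP; have := gD 0 0; rewrite addr0 => /(congr1 (fun v => v - g 0)); rewrite addrK subrr => <-.
exact: (big_morph g gD g0).
Qed.

Lemma sum_sym_anti (R : numDomainType) k (M f : 'I_k -> 'I_k -> R) :
  (forall i j, M i j = M j i) -> (forall i j, f i j = - f j i) ->
  \sum_i \sum_j M i j * f i j = 0.
Proof.
move=> HM Hf; set S := \sum_i _.
have : S = - S.
  rewrite {1}/S exchange_big /= /S -sumrN; apply: eq_bigr => i _.
  by rewrite -sumrN; apply: eq_bigr => j _; rewrite (HM j i) (Hf j i) mulrN.
move/eqP; rewrite -subr_eq0 opprK -mulr2n -mulr_natr mulf_eq0 pnatr_eq0 orbF.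
by move/eqP.
Qed.

Lemma row_diagm (R : nzRingType) k n (Z : 'rV[R]_n) (r : 'I_k.+1) :
  row r (diagm Z : 'M_(k.+1, n)) = Z.
Proof. by rewrite /diagm /tens row_mul; apply/rowP=> j; rewrite !mxE big_ord1 !mxE mul1r. Qed.

Lemma row_brg (R : nzRingType) k n br (X Y : 'M[R]_(k.+1, n)) r :
  row r (brg br X Y) = br (row r X) (row r Y).
Proof. by rewrite /brg rowK. Qed.

Lemma row_proj (R : nzRingType) k n (X : 'M[R]_(k.+1, n)) r :
  row r (proj_gm X) = row r X - row ord_max X.
Proof. by rewrite /proj_gm linearB /= row_diagm. Qed.

Lemma diagm_lin (R : comNzRingType) k n c (Z W : 'rV[R]_n) :
  (diagm (c *: Z + W) : 'M_(k.+1, n)) = c *: diagm Z + diagm W.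
Proof. by apply/row_matrixP => r; rewrite linearD linearZ /= !row_diagm. Qed.

Lemma diagmB (R : comNzRingType) k n (Z W : 'rV[R]_n) :
  (diagm (Z - W) : 'M_(k.+1, n)) = diagm Z - diagm W.
Proof. by apply/row_matrixP => r; rewrite linearB /= !row_diagm. Qed.

Lemma diagm_inj (R : nzRingType) k n (Z W : 'rV[R]_n) :
  (diagm Z : 'M_(k.+1, n)) = diagm W -> Z = W.
Proof. by move/(congr1 (row ord0)); rewrite !row_diagm. Qed.

Lemma proj_diagm (R : nzRingType) k n (Z : 'rV[R]_n) :
  proj_gm (diagm Z : 'M_(k.+1, n)) = 0.
Proof. by rewrite /proj_gm row_diagm subrr. Qed.

Lemma scal_lin (R : nzRingType) m (g : 'rV[R]_m -> R) :
  (forall (c : R) x y, g (c *: x + y) = c * g x + g y) ->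
  [/\ (forall x y, g (x + y) = g x + g y), g 0 = 0, (forall x, g (- x) = - g x)
    & (forall c x, g (c *: x) = c * g x)].
Proof.
move=> H.
have gD : forall x y, g (x + y) = g x + g y by move=> x y; rewrite -[x]scale1r H mul1r scale1r.
have g0 : g 0 = 0.
  by apply/eqP; have := gD 0 0; rewrite addr0 => /(congr1 (fun v => v - g 0)); rewrite addrK subrr => <-.
have gZ : forall c x, g (c *: x) = c * g x by move=> c x; rewrite -[c *: x]addr0 H g0 addr0.
split=> // x; by rewrite -scaleN1r gZ mulN1r.
Qed.

Lemma kfl (R : comNzRingType) n (br : 'rV[R]_n -> 'rV[R]_n -> 'rV[R]_n) Z :
  is_lie_bracket br ->
  [/\ (forall x y, kform br (x + y) Z = kform br x Z + kform br y Z), kform br 0 Z = 0,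
      (forall x, kform br (- x) Z = - kform br x Z)
    & (forall c x, kform br (c *: x) Z = c * kform br x Z)].
Proof. by move=> Hb; apply: (scal_lin (g := fun x => kform br x Z)) => c x y; rewrite kformL. Qed.

Lemma kfr (R : comNzRingType) n (br : 'rV[R]_n -> 'rV[R]_n -> 'rV[R]_n) Z :
  is_lie_bracket br ->
  [/\ (forall x y, kform br Z (x + y) = kform br Z x + kform br Z y), kform br Z 0 = 0,
      (forall x, kform br Z (- x) = - kform br Z x)
    & (forall c x, kform br Z (c *: x) = c * kform br Z x)].
Proof. by move=> Hb; apply: (scal_lin (g := fun x => kform br Z x)) => c x y; rewrite kformR. Qed.

Lemma brB (R : nzRingType) n (br : 'rV[R]_n -> 'rV[R]_n -> 'rV[R]_n) :
  is_lie_bracket br ->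
  (forall x y z, br (x - y) z = br x z - br y z) /\ (forall x y z, br z (x - y) = br z x - br z y).
Proof.
move=> Hb; have [Dl Dr Zl Zr N] := brL Hb.
split=> x y z; rewrite -scaleN1r ?Dl ?Dr ?Zl ?Zr scaleN1r //.
Qed.

Lemma kform_swap (R : comNzRingType) n (br : 'rV[R]_n -> 'rV[R]_n -> 'rV[R]_n) x w u :
  is_lie_bracket br -> kform br (br x w) u = kform br w (br u x).
Proof.
move=> Hb; have [Dl Dr Zl Zr N] := brL Hb.
have [_ _ Nl _] := kfl w Hb.
have [_ _ Nr _] := kfr x Hb.
by rewrite kform_inv // [RHS]kformC (N u x) Nl kform_inv // (N u w) Nr opprK.
Qed.

Lemma GI (R : numFieldType) k n (br : 'rV[R]_n -> 'rV[R]_n -> 'rV[R]_n) (a : 'M[R]_k)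
   (X Y : 'M[R]_(k.+1, n)) :
  is_lie_bracket br -> a^T = a ->
  ipg br a (proj_gm (brg br X Y)) (proj_gm X) =
  \sum_i \sum_j a i j * kform br (row (wid i) Y - row ord_max Y)
                           (br (row (wid j) X - row ord_max X) (row (wid i) X)).
Proof.
move=> Hb Ha; have [Dl Dr Zl Zr N] := brL Hb; have [Bl Br] := brB Hb.
rewrite /ipg.
set ym := row ord_max Y; set xm := row ord_max X.
have E : forall i j : 'I_k, kform br (row (wid i) (proj_gm (brg br X Y))) (row (wid j) (proj_gm X))
   = kform br (row (wid i) Y - ym) (br (row (wid j) X - xm) (row (wid i) X))
     - kform br ym (br (row (wid i) X - xm) (row (wid j) X - xm)).
  move=> i j; rewrite !row_proj !row_brg -/xm -/ym.
  have -> : br (row (wid i) X) (row (wid i) Y) - br xm ym =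
            br (row (wid i) X) (row (wid i) Y - ym) + br (row (wid i) X - xm) ym.
    by rewrite Br Bl addrA subrK.
  have [Dk _ _ _] := kfl (row (wid j) X - xm) Hb.
  rewrite Dk kform_swap //; congr (_ + _).
  rewrite kform_swap // (N (row (wid j) X - xm)).
  by have [_ _ Nk _] := kfr ym Hb; rewrite Nk.
under eq_bigr => i _ do under eq_bigr => j _ do rewrite E mulrBr.
rewrite -[RHS]subr0; under eq_bigr => i _ do rewrite sumrB.
rewrite sumrB; congr (_ - _).
apply: sum_sym_anti.
  by move=> i j; rewrite -{1}Ha mxE.
move=> i j; rewrite (N (row (wid i) X - xm)).
by have [_ _ Nk _] := kfr ym Hb; rewrite Nk.
Qed.

Definition Lg (R : nzRingType) k n (g : 'I_k -> R) (X : 'M[R]_(k.+1, n)) : 'rV[R]_n :=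
  row ord_max X + \sum_l g l *: (row (wid l) X - row ord_max X).

Lemma LgL (R : comNzRingType) k n (g : 'I_k -> R) c (X Y : 'M[R]_(k.+1, n)) :
  Lg g (c *: X + Y) = c *: Lg g X + Lg g Y.
Proof.
apply/rowP=> t; rewrite /Lg !(mxE, summxE).
under eq_bigr => l _ do rewrite !mxE.
under [in RHS]eq_bigr => l _ do rewrite !mxE.
under [in X in _ = _ + (_ + X)]eq_bigr => l _ do rewrite !mxE.
rewrite mulrDr mulr_sumr.
set s1 := \sum_(i < k) _.
set s2 := \sum_(i < k) _.
set s3 := \sum_(i < k) _.
have -> : s1 = s2 + s3 by rewrite /s1 /s2 /s3 -big_split; apply: eq_bigr => l _ /=; ring.
ring.
Qed.

Lemma Lg_diagm (R : comNzRingType) k n (g : 'I_k -> R) (Z : 'rV[R]_n) :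
  Lg g (diagm Z : 'M_(k.+1, n)) = Z.
Proof. by rewrite /Lg row_diagm big1 ?addr0 // => l _; rewrite !row_diagm subrr scaler0. Qed.

Lemma proj_lin (R : comNzRingType) k n c (X Y : 'M[R]_(k.+1, n)) :
  proj_gm (c *: X + Y) = c *: proj_gm X + proj_gm Y.
Proof.
rewrite /proj_gm linearD linearZ /= diagm_lin.
apply/matrixP=> i j; rewrite !mxE; ring.
Qed.

Lemma LgB (R : comNzRingType) k n (g : 'I_k -> R) (X Y : 'M[R]_(k.+1, n)) :
  Lg g (X - Y) = Lg g X - Lg g Y.
Proof. by rewrite addrC -scaleN1r LgL scaleN1r addrC. Qed.

Lemma Lg0 (R : comNzRingType) k n (g : 'I_k -> R) : Lg g (0 : 'M[R]_(k.+1, n)) = 0.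
Proof. by rewrite -(subrr (0 : 'M[R]_(k.+1, n))) LgB subrr. Qed.

Lemma projB (R : comNzRingType) k n (X Y : 'M[R]_(k.+1, n)) :
  proj_gm (X - Y) = proj_gm X - proj_gm Y.
Proof. by rewrite addrC -scaleN1r proj_lin scaleN1r addrC. Qed.

Lemma diagm0 (R : comNzRingType) k n : (diagm (0 : 'rV[R]_n) : 'M_(k.+1, n)) = 0.
Proof. by rewrite /diagm /tens mulmx0. Qed.

Lemma SUFF (R : numFieldType) k n (br : 'rV[R]_n -> 'rV[R]_n -> 'rV[R]_n) (a : 'M[R]_k)
   (g : 'I_k -> R) :
 is_lie_bracket br -> a^T = a ->
 (forall i j p, a i j * ((i == p)%:R - g p) = a i p * ((i == j)%:R - g j)) ->
 naturally_reductive br a.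
Proof.
move=> Hb Ha HM; have [Dl Dr Zl Zr N] := brL Hb; have [Bl Br] := brB Hb.
exists (fun X => Lg g X = 0); split.
- split; first exact: Lg0.
  by move=> c X Y HX HY; rewrite LgL HX HY scaler0 addr0.
- by move=> X HX [Z HZ]; move: HX; rewrite HZ Lg_diagm => ->; rewrite diagm0.
- move=> X; exists (X - diagm (Lg g X)), (diagm (Lg g X)); split.
  + by rewrite LgB Lg_diagm subrr.
  + by exists (Lg g X).
  + by rewrite subrK.
- move=> W U [Z ->] HU.
  have -> : Lg g (brg br (diagm Z) U) = br Z (Lg g U).
    have HZ : forall c x y, br Z (c *: x + y) = c *: br Z x + br Z y by move=> c x y; rewrite Dr Zr.
    rewrite /Lg !row_brg !row_diagm Dr (lin_sum _ _ _ HZ).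
    congr (_ + _); apply: eq_bigr => l _; by rewrite !row_brg !row_diagm Zr Br.
  by rewrite HU -(scale0r Z) Zr !scale0r.
move=> X Y U W PX PY PU [Z HW] HXY.
have -> : U = brg br X Y - W by rewrite HXY addrK.
rewrite projB HW proj_diagm subr0 GI //.
apply: big1 => i _.
set w := row (wid i) Y - row ord_max Y.
set u := fun p => row (wid p) X - row ord_max X.
have Xi : row (wid i) X = \sum_p ((i == p)%:R - g p) *: u p.
  under eq_bigr do rewrite scalerBl.
  rewrite sumrB (bigD1 i) //= eqxx scale1r big1 ?addr0.
    have PX' : \sum_l g l *: u l = - row ord_max X.
      by move: PX; rewrite /Lg => /eqP; rewrite addrC addr_eq0 => /eqP.
    by rewrite PX' opprK /u subrK.
  by move=> p /negbTE pi; rewrite eq_sym pi scale0r.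
rewrite Xi.
have E : forall j, a i j * kform br w (br (u j) (\sum_p ((i == p)%:R - g p) *: u p))
   = \sum_p (a i j * ((i == p)%:R - g p)) * kform br w (br (u j) (u p)).
  move=> j.
  have H1 : forall c x y, br (u j) (c *: x + y) = c *: br (u j) x + br (u j) y by move=> c x y; rewrite Dr Zr.
  have H2 : forall c x y, kform br w (c *: x + y) = c * kform br w x + kform br w y by move=> c x y; rewrite kformR.
  rewrite (lin_sum _ _ _ H1) (scal_lin_sum _ _ _ H2).
  rewrite mulr_sumr; apply: eq_bigr => p _; rewrite Zr.
  have [_ _ _ Zk] := kfr w Hb.
  by rewrite Zk mulrA.
under eq_bigr do rewrite E.
apply: sum_sym_anti; first by move=> j p; rewrite HM.
move=> j p; rewrite (N (u j)).
by have [_ _ Nk _] := kfr w Hb; rewrite Nk.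
Qed.

Definition condG (R : nzRingType) k (a : 'M[R]_k) (g : 'I_k -> R) :=
  forall l j : 'I_k, l != j -> (1 - g l) * a l j = - g j * a l l.

Lemma G2M (R : realFieldType) k (a : 'M[R]_k) (g : 'I_k -> R) :
  (forall i, 0 < a i i) -> condG a g ->
  forall i j p, a i j * ((i == p)%:R - g p) = a i p * ((i == j)%:R - g j).
Proof.
move=> Hd HG i j p.
case: (eqVneq j p) => [-> //|jp].
case: (eqVneq i j) => [ij|ij].
  subst j; rewrite (negbTE jp) /= sub0r mulrN mulrC -mulNr -HG //.
  by rewrite mulrC.
case: (eqVneq i p) => [ip|ip].
  by subst p; rewrite /= sub0r mulrC HG // mulrC.
rewrite /= !sub0r !mulrN; congr (- _).
have Hj := HG i j ij; have Hp := HG i p ip.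
have aii := Hd i.
case: (eqVneq (g i) 1) => [gi1|gi1].
  move: Hj Hp; rewrite gi1 subrr !mul0r => /esym/eqP Hj /esym/eqP Hp.
  move: Hj Hp; rewrite !mulf_eq0 !oppr_eq0 !(gt_eqF aii) !orbF => /eqP -> /eqP ->.
  by rewrite !mulr0.
apply: (mulfI (x := 1 - g i)); first by rewrite subr_eq0 eq_sym.
by rewrite mulrA Hj mulrA Hp; ring.
Qed.

Definition emb (R : nzRingType) k n (l : 'I_k) (Z : 'rV[R]_n) : 'M[R]_(k.+1, n) :=
  \matrix_r (if r == wid l then Z else 0).

Lemma wid_inj k (i j : 'I_k) : (wid i == wid j) = (i == j).
Proof. by apply/eqP/eqP => [/(congr1 val) /= /val_inj|->]. Qed.

Lemma wid_max k (i : 'I_k) : (wid i == ord_max) = false.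
Proof. by apply/negbTE; rewrite -val_eqE /= neq_ltn ltn_ord. Qed.

Lemma row_emb (R : nzRingType) k n (l : 'I_k) (Z : 'rV[R]_n) r :
  row r (emb l Z) = if r == wid l then Z else 0.
Proof. by rewrite rowK. Qed.

Lemma row_emb_max (R : nzRingType) k n (l : 'I_k) (Z : 'rV[R]_n) :
  row ord_max (emb l Z) = 0.
Proof. by rewrite row_emb eq_sym wid_max. Qed.

Lemma row_emb_wid (R : nzRingType) k n (l i : 'I_k) (Z : 'rV[R]_n) :
  row (wid i) (emb l Z) = if i == l then Z else 0.
Proof. by rewrite row_emb wid_inj. Qed.

Lemma emb_lin (R : comNzRingType) k n (l : 'I_k) c (Z W : 'rV[R]_n) :
  emb l (c *: Z + W) = c *: emb l Z + emb l W.
Proof.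
apply/row_matrixP => r; rewrite linearD linearZ /= !row_emb.
by case: ifP => _; rewrite ?scaler0 ?addr0.
Qed.

Lemma kform_def (R : realFieldType) n (br : 'rV[R]_n -> 'rV[R]_n -> 'rV[R]_n) V :
  compact_simple_lie br -> kform br V V = 0 -> V = 0.
Proof.
case=> _ Hneg H; apply/eqP; apply/negP => /negP HV.
by have := Hneg V HV; rewrite /kform in H; move/eqP: H; rewrite oppr_eq0 => /eqP ->; rewrite ltxx.
Qed.

Lemma kill_br (R : realFieldType) n (br : 'rV[R]_n -> 'rV[R]_n -> 'rV[R]_n) (L : 'rV[R]_n -> 'rV[R]_n) :
  compact_simple_lie br -> (forall (c : R) x y, L (c *: x + y) = c *: L x + L y) ->
  (forall X Y, L (br X Y) = 0) -> forall Z, L Z = 0.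
Proof.
move=> [[Hb [[X0 [Y0 H0]] Hs]] _] HL Hk Z.
set U := kermx (lin1_mx L).
have subU : forall X : 'rV[R]_n, (X <= U)%MS = (L X == 0).
  by move=> X; rewrite sub_kermx mul_lin1.
have HU : forall X Y : 'rV[R]_n, (X <= U)%MS -> (br X Y <= U)%MS by move=> X Y _; rewrite subU Hk.
have [r0|rn] := Hs U HU.
- move: r0 => /eqP; rewrite mxrank_eq0 => /eqP U0.
  have : (br X0 Y0 <= U)%MS by rewrite subU Hk.
  by rewrite U0 submx0 (negbTE H0).
- apply/eqP; rewrite -subU; apply: submx_full.
  by rewrite /row_full rn.
Qed.

Lemma NEC_theta (R : realFieldType) k n (br : 'rV[R]_n -> 'rV[R]_n -> 'rV[R]_n) (a : 'M[R]_k) :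
  compact_simple_lie br -> a^T = a -> naturally_reductive br a ->
  exists th : 'I_k -> 'rV[R]_n -> 'rV[R]_n,
    (forall l c x y, th l (c *: x + y) = c *: th l x + th l y) /\
    (forall l j, l != j -> forall Z, a l l *: th j Z + a l j *: (Z - th l Z) = 0).
Proof.
move=> Hc Ha [P [[P0 PL] Ph Pdec Pinv Pnr]].
have Hb : is_lie_bracket br by case: Hc => [[]].
have [Dl Dr Zl Zr N] := brL Hb; have [Bl Br] := brB Hb.
have PB : forall A B, P A -> P B -> P (A - B).
  by move=> A B PA PBB; have := PL (-1) B A PBB PA; rewrite scaleN1r addrC.
have ex : forall X, exists Q, P (X - diagm Q).
  by move=> X; have [U [W [PU [Z HW] HX]]] := Pdec X; exists Z; rewrite HX HW addrK.
pose q X := proj1_sig (constructive_indefinite_description _ (ex X)).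
have Hq : forall X, P (X - diagm (q X)).
  by move=> X; exact: (proj2_sig (constructive_indefinite_description _ (ex X))).
have uniq : forall X Q, P (X - diagm Q) -> q X = Q.
  move=> X Q HQ.
  have := PB _ _ (Hq X) HQ.
  have -> : X - diagm (q X) - (X - diagm Q) = diagm (Q - q X) :> 'M_(k.+1, n).
    by rewrite diagmB; apply/matrixP => i j; rewrite !mxE; ring.
  move/Ph => H; have /H : in_h (diagm (Q - q X) : 'M_(k.+1, n)) by exists (Q - q X).
  rewrite -(diagm0 R k n) => /diagm_inj /eqP; rewrite subr_eq0 => /eqP ->. done.
have qL : forall c X Y, q (c *: X + Y) = c *: q X + q Y.
  move=> c X Y; apply: uniq.
  have -> : c *: X + Y - diagm (c *: q X + q Y) = c *: (X - diagm (q X)) + (Y - diagm (q Y)).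
    by rewrite diagm_lin scalerBr opprD addrACA.
  by apply: PL; apply: Hq.
have qInv : forall W X, q (brg br (diagm W) X) = br W (q X).
  move=> W X; apply: uniq.
  have -> : brg br (diagm W) X - diagm (br W (q X)) = brg br (diagm W) (X - diagm (q X)).
    apply/row_matrixP => r; rewrite linearB /= !row_brg !row_diagm linearB /= row_diagm.
    by rewrite Br.
  by apply: Pinv; [exists W | apply: Hq].
pose th l Z := q (emb l Z).
have thL : forall l c x y, th l (c *: x + y) = c *: th l x + th l y.
  by move=> l c x y; rewrite /th emb_lin qL.
have thInv : forall l W Z, th l (br W Z) = br W (th l Z).
  move=> l W Z; rewrite /th -qInv; congr (q _).
  apply/row_matrixP => r; rewrite row_brg !row_emb row_diagm.
  by case: ifP => // _; rewrite -(scale0r W) Zr !scale0r.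
exists th; split => //.
move=> l j lj.
have thA : forall l, [/\ (forall x y, th l (x + y) = th l x + th l y), th l 0 = 0 &
      (forall c x, th l (c *: x) = c *: th l x)].
  by move=> l0; have [H1 [H2 H3]] := lin_add (thL l0).
have Hxx : forall X, br X X = 0 by case: Hb.
pose Lf Z := a l l *: th j Z + a l j *: (Z - th l Z).
apply: (kill_br Hc (L := Lf)).
  move=> c x y; rewrite /Lf !thL.
  by apply/rowP => t; rewrite !mxE; ring.
move=> A B.
set E := emb l A + emb j B.
set X := E - diagm (q E).
have PX : P X := Hq E.
have Xl : row (wid l) X = A - (th l A + th j B).
  rewrite /X linearB /= row_diagm /E linearD /= !row_emb_wid eqxx (negbTE lj) addr0.
  by rewrite -[emb l A]scale1r qL scale1r.
have uE : forall p, row (wid p) X - row ord_max X = (if p == l then A else 0) + (if p == j then B else 0).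
  move=> p; rewrite /X !linearB /= !row_diagm /E !linearD /= !row_emb_wid !row_emb_max.
  by rewrite !oppr0 !add0r opprK subrK.
set V := a l l *: br A (row (wid l) X) + a l j *: br B (row (wid l) X).
have key : forall Q, kform br Q V = 0.
  move=> Q; set Y := emb l Q - diagm (th l Q).
  have PY : P Y := Hq _.
  have wE : forall i, row (wid i) Y - row ord_max Y = if i == l then Q else 0.
    move=> i; rewrite /Y !linearB /= !row_diagm !row_emb_wid !row_emb_max.
    by rewrite !oppr0 !add0r opprK subrK.
  have [U [W [PU HW HXY]]] := Pdec (brg br X Y).
  have := Pnr X Y U W PX PY PU HW HXY.
  case: HW => Z HW.
  have -> : U = brg br X Y - W by rewrite HXY addrK.
  rewrite projB HW proj_diagm subr0 GI //.
  rewrite (bigD1 l) //= [X in _ + X]big1 ?addr0; last first.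
    move=> i il; apply: big1 => p _; rewrite wE (negbTE il).
    by have [_ K0 _ _] := kfl (br (row (wid p) X - row ord_max X) (row (wid i) X)) Hb; rewrite K0 mulr0.
  rewrite wE eqxx (bigD1 l) //= (bigD1 j) /=; last by rewrite eq_sym lj.
  rewrite [X in _ + (_ + X)]big1 ?addr0; last first.
    move=> p /andP [pl pj]; rewrite uE (negbTE pj) (negbTE pl) addr0.
    have -> : br 0 (row (wid l) X) = 0 by rewrite -(scale0r A) Zl !scale0r.
    by have [_ K0 _ _] := kfr Q Hb; rewrite K0 mulr0.
  rewrite !uE eqxx (negbTE lj) eq_sym (negbTE lj) eqxx addr0 add0r.
  have [KD _ _ KZ] := kfr Q Hb.
  by rewrite /V KD !KZ.
have V0 : V = 0 by apply: (kform_def Hc); exact: key.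
have e1 : br A (row (wid l) X) = - th j (br A B).
  rewrite Xl Br Dr -!thInv !Hxx; have [_ t0 _] := thA l; by rewrite t0 sub0r add0r.
have e2 : br B (row (wid l) X) = br B A - th l (br B A).
  rewrite Xl Br Dr -!thInv Hxx; have [_ t0 _] := thA j; by rewrite t0 addr0.
have thN : th l (- br A B) = - th l (br A B).
  by have [_ _ tZ] := thA l; rewrite -scaleN1r tZ scaleN1r.
move: V0; rewrite /V e1 e2 (N B A) thN /Lf => V0.
apply/eqP; rewrite -oppr_eq0 -V0; apply/eqP/rowP => t; rewrite !mxE; ring.
Qed.
Lemma lincomb (R : comNzRingType) (x y u v L : R) : x = 0 -> y = 0 -> L = u * x + v * y -> L = 0.
Proof. by move=> -> ->; rewrite !mulr0 addr0. Qed.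

Lemma NEC_G (R : realFieldType) k n (a : 'M[R]_k) (th : 'I_k -> 'rV[R]_n -> 'rV[R]_n)
   (i0 i1 : 'I_k) :
  (0 < n)%N -> i0 != i1 -> (forall i, 0 < a i i) ->
  a i0 i0 * a i1 i1 - a i0 i1 * a i1 i0 != 0 ->
  (forall l c x y, th l (c *: x + y) = c *: th l x + th l y) ->
  (forall l j, l != j -> forall Z, a l l *: th j Z + a l j *: (Z - th l Z) = 0) ->
  exists g, condG a g.
Proof.
move=> n0 i01 Hd Hdet thL key.
set det := a i0 i0 * a i1 i1 - a i0 i1 * a i1 i0.
set g0 := - a i1 i0 * (a i0 i0 + a i0 i1) / det.
have th0 : forall Z, th i0 Z = g0 *: Z.
  move=> Z; apply/rowP => t.
  have i10 : i1 != i0 by rewrite eq_sym.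
  have e1 := key _ _ i01 Z; have e2 := key _ _ i10 Z.
  move/rowP/(_ t): e1; move/rowP/(_ t): e2; rewrite !mxE => e2 e1.
  have H : det * th i0 Z 0 t = - a i1 i0 * (a i0 i0 + a i0 i1) * Z 0 t.
    apply/eqP; rewrite -subr_eq0; apply/eqP.
    by apply: (lincomb (u := a i0 i0) (v := a i1 i0) e2 e1); rewrite /det; ring.
  rewrite -[th i0 Z 0 t](mulKf Hdet) H /g0 -/det; ring.
have a0 : a i0 i0 != 0 by rewrite gt_eqF.
have thj : forall j, j != i0 -> forall Z, th j Z = (- a i0 j * (1 - g0) / a i0 i0) *: Z.
  move=> j j0 Z; apply/rowP => t.
  have j0' : i0 != j by rewrite eq_sym.
  have e := key i0 j j0' Z; move/rowP/(_ t): e; rewrite !mxE th0 mxE => e.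
  have H : a i0 i0 * th j Z 0 t = - a i0 j * (1 - g0) * Z 0 t.
    apply/eqP; rewrite -subr_eq0; apply/eqP.
    by apply: (lincomb (u := 1) (v := 1) e (erefl (0:R))); ring.
  by rewrite -[th j Z 0 t](mulKf a0) H; field.
pose g p := if p == i0 then g0 else - a i0 p * (1 - g0) / a i0 i0.
have thg : forall p Z, th p Z = g p *: Z.
  move=> p Z; rewrite /g; case: eqP => [->|/eqP pi0]; [exact: th0 | exact: thj].
exists g => l j lj.
have e := key l j lj (delta_mx 0 (Ordinal n0)).
move/rowP/(_ (Ordinal n0)): e; rewrite !thg !mxE !eqxx /= => e.
apply/eqP; rewrite -subr_eq0; apply/eqP.
by apply: (lincomb (u := 1) (v := 1) e (erefl (0:R))); ring.
Qed.
Definition bf (R : comNzRingType) k (a : 'M[R]_k) (x y : 'rV[R]_k) : R := (x *m a *m y^T) 0 0.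

Lemma bfL (R : comNzRingType) k (a : 'M[R]_k) c x y z :
  bf a (c *: x + y) z = c * bf a x z + bf a y z.
Proof. by rewrite /bf !mulmxDl -!scalemxAl !mxE. Qed.

Lemma bfR (R : comNzRingType) k (a : 'M[R]_k) c x y z :
  bf a z (c *: x + y) = c * bf a z x + bf a z y.
Proof. by rewrite /bf linearD linearZ /= mulmxDr -scalemxAr !mxE. Qed.

Lemma bf_comb (R : comNzRingType) k (a : 'M[R]_k) s t x y :
  bf a (s *: x + t *: y) (s *: x + t *: y) =
  s ^+ 2 * bf a x x + s * t * (bf a x y + bf a y x) + t ^+ 2 * bf a y y.
Proof.
set w := s *: x + t *: y.
have [Dl _ _ Zl] := scal_lin (g := fun u => bf a u w) (fun c u v => bfL a c u v w).
rewrite {1}/w Dl !Zl /w.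
have [Dr _ _ Zr] := scal_lin (g := fun z => bf a x z) (fun c u v => bfR a c u v x).
have [Dr' _ _ Zr'] := scal_lin (g := fun z => bf a y z) (fun c u v => bfR a c u v y).
rewrite Dr Dr' !Zr !Zr'; ring.
Qed.

Lemma bf_e (R : comNzRingType) k (a : 'M[R]_k) p q :
  bf a (delta_mx 0 p) (delta_mx 0 q) = a p q.
Proof.
rewrite /bf -rowE mxE (bigD1 q) //= big1 ?addr0.
  by rewrite !mxE !eqxx mulr1.
by move=> j /negbTE jq; rewrite !mxE jq andbF mulr0.
Qed.

Lemma bf_1e (R : comNzRingType) k (a : 'M[R]_k) i :
  bf a (const_mx 1) (delta_mx 0 i) = \sum_p a p i.
Proof.
rewrite /bf mxE (bigD1 i) //= big1 ?addr0.
  rewrite !mxE !eqxx /= mulr1; apply: eq_bigr => p _; by rewrite mxE mul1r.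
by move=> j /negbTE jq; rewrite !mxE jq andbF mulr0.
Qed.

Lemma bf_11 (R : comNzRingType) k (a : 'M[R]_k) :
  bf a (const_mx 1) (const_mx 1) = \sum_p \sum_q a p q.
Proof.
rewrite /bf mxE exchange_big /=; apply: eq_bigr => q _.
rewrite !mxE mulr1; apply: eq_bigr => p _; by rewrite mxE mul1r.
Qed.

Lemma bfC (R : comNzRingType) k (a : 'M[R]_k) x y : a^T = a -> bf a x y = bf a y x.
Proof.
move=> Ha; rewrite /bf.
have -> : (x *m a *m y^T) 0 0 = (x *m a *m y^T)^T 0 0 by rewrite [RHS]mxE.
by rewrite !trmx_mul trmxK Ha mulmxA.
Qed.

Lemma pd_bf (R : realFieldType) k (a : 'M[R]_k) x : posdef_sym a -> x != 0 -> 0 < bf a x x.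
Proof. by case=> _ H; apply: H. Qed.

Lemma e_neq0 (R : realFieldType) k (i : 'I_k) : (delta_mx 0 i : 'rV[R]_k) != 0.
Proof. by apply/eqP => /rowP /(_ i); rewrite !mxE !eqxx /=; move/eqP; rewrite oner_eq0. Qed.

Lemma pd_diag (R : realFieldType) k (a : 'M[R]_k) i : posdef_sym a -> 0 < a i i.
Proof. by move=> Hp; rewrite -bf_e; apply: pd_bf => //; apply: e_neq0. Qed.

Lemma pd_sym (R : realFieldType) k (a : 'M[R]_k) i j : posdef_sym a -> a i j = a j i.
Proof. by case=> Ha _; rewrite -{1}Ha mxE. Qed.

Lemma one_neq0 (R : realFieldType) k : (0 < k)%N -> (const_mx 1 : 'rV[R]_k) != 0.
Proof.
move=> k0; apply/eqP => /rowP /(_ (Ordinal k0)); rewrite !mxE.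
by move/eqP; rewrite oner_eq0.
Qed.

Lemma pd_11 (R : realFieldType) k (a : 'M[R]_k) : (0 < k)%N -> posdef_sym a ->
  0 < \sum_p \sum_q a p q.
Proof. by move=> k0 Hp; rewrite -bf_11; apply: pd_bf => //; apply: one_neq0. Qed.

Lemma pd_2 (R : realFieldType) k (a : 'M[R]_k) p q s t : posdef_sym a -> p != q -> s != 0 ->
  0 < s ^+ 2 * a p p + s * t * (a p q + a q p) + t ^+ 2 * a q q.
Proof.
move=> Hp pq s0; rewrite -!bf_e -bf_comb; apply: pd_bf => //.
apply/eqP => /rowP /(_ p); rewrite !mxE !eqxx /= (negbTE pq) /=.
by rewrite mulr1 mulr0 addr0 => /eqP; rewrite (negbTE s0).
Qed.

Lemma pd_1e (R : realFieldType) k (a : 'M[R]_k) i s t : posdef_sym a -> s + t != 0 ->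
  0 < s ^+ 2 * (\sum_p \sum_q a p q) + s * t * ((\sum_p a p i) + (\sum_p a p i)) + t ^+ 2 * a i i.
Proof.
move=> Hp st0; have Ha : a^T = a by case: Hp.
rewrite -bf_e -bf_11 -bf_1e {2}(bfC _ _ Ha) -bf_comb; apply: pd_bf => //.
apply/eqP => /rowP /(_ i); rewrite !mxE !eqxx /=.
by rewrite !mulr1 => /eqP; rewrite (negbTE st0).
Qed.

Lemma CASEB (R : realFieldType) k (a : 'M[R]_k) (g : 'I_k -> R) l :
  (0 < k)%N -> posdef_sym a -> condG a g -> g l = 1 -> cond_b a.
Proof.
move=> k0 Hp HG gl.
have g0 : forall j, j != l -> g j = 0.
  move=> j jl; have lj : l != j by rewrite eq_sym.
  have := HG l j lj; rewrite gl subrr mul0r.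
  move/esym/eqP; rewrite mulf_eq0 oppr_eq0 (gt_eqF (pd_diag _ Hp)) orbF => /eqP //.
have H1 : forall i, i != l -> - a i l = a i i.
  move=> i il; have := HG i l il; rewrite gl (g0 i il) subr0 mul1r mulN1r => ->.
  by rewrite opprK.
have H2 : forall i j, i != j -> i != l -> j != l -> a i j = 0.
  by move=> i j ij il jl; have := HG i j ij; rewrite !g0 // subr0 mul1r oppr0 mul0r.
exists l; split => //.
  by move=> i il; split; [exact: H1 | exact: pd_diag].
have := pd_11 k0 Hp.
rewrite (bigD1 l) //= [X in _ < _ + X]big1 ?addr0; last first.
  move=> p pl; rewrite (bigD1 p) //= (bigD1 l) /=; last by rewrite eq_sym.
  rewrite big1 ?addr0; last by move=> q /andP [qp ql]; apply: H2; rewrite // eq_sym.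
  by rewrite -(H1 p pl) addNr.
rewrite (bigD1 l) //=.
have -> : \sum_(q < k | q != l) a l q = - \sum_(q < k | q != l) a q q.
  by rewrite -sumrN; apply: eq_bigr => q ql; rewrite (pd_sym _ _ Hp) -(H1 q ql) opprK.
by rewrite subr_gt0.
Qed.

Lemma wid_lift k (l : 'I_k) : wid l = lift ord_max l.
Proof. by apply: val_inj; rewrite [RHS](lift_max l). Qed.

Definition extv (R : Type) k (al : 'I_k -> R) (am : R) (i : 'I_k.+1) : R :=
  if unlift ord_max i is Some l then al l else am.

Lemma extv_wid (R : Type) k (al : 'I_k -> R) am l : extv al am (wid l) = al l.
Proof. by rewrite /extv wid_lift liftK. Qed.

Lemma extv_max (R : Type) k (al : 'I_k -> R) am : extv al am ord_max = am.
Proof. by rewrite /extv unlift_none. Qed.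

Lemma ord_cases k (i : 'I_k.+1) : i = ord_max \/ exists l, i = wid l.
Proof.
case: (unliftP ord_max i) => [l ->|->]; last by left.
by right; exists l; rewrite wid_lift.
Qed.

Lemma extv_sum (R : nzRingType) k (al : 'I_k -> R) am :
  \sum_(i < k.+1) extv al am i = \sum_l al l + am.
Proof. by rewrite big_ord_recr /= extv_max; congr (_ + _); apply: eq_bigr => l _; rewrite -(extv_wid al am). Qed.

Lemma negprod (R : realFieldType) (u v : R) : u < 0 -> v < 0 -> u * v * (u + v) < 0.
Proof. move=> hu hv. have : 0 < u * v by nra. nra. Qed.

Lemma CASEC (R : realFieldType) k (a : 'M[R]_k) (al : 'I_k -> R) S :
  (0 < k)%N -> posdef_sym a -> S != 0 -> (forall l, al l != 0) ->
  (forall i j, a i j = (i == j)%:R * al i - al i * al j / S) -> cond_c a.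
Proof.
move=> k0 Hp S0 alnz Hf.
set T := \sum_l al l. set am := S - T.
have hT : T = S - am by rewrite /am opprB addrC subrK.
have rs : forall p, \sum_q a p q = al p * am / S.
  move=> p; under eq_bigr do rewrite Hf.
  rewrite sumrB (bigD1 p) //= eqxx mul1r big1 ?addr0; last first.
    by move=> q /negbTE qp; rewrite eq_sym qp mul0r.
  rewrite -mulr_suml -mulr_sumr -/T hT; field; exact: S0.
have q1 : \sum_p \sum_q a p q = T * am / S.
  by under eq_bigr do rewrite rs; rewrite -!mulr_suml.
have q1p := pd_11 k0 Hp; rewrite q1 in q1p.
have am0 : am != 0 by apply/eqP => h; move: q1p; rewrite h mulr0 mul0r ltxx.
have cs : forall p, \sum_q a q p = al p * am / S.
  by move=> p; rewrite -rs; apply: eq_bigr => q _; rewrite (pd_sym _ _ Hp).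
have NEG2 : forall i j, i != j -> extv al am i < 0 -> extv al am j < 0 -> False.
  have C1 : forall p, al p < 0 -> am < 0 -> False.
    move=> p hp hm.
    have st : al p + am != 0 by rewrite lt_eqF //; lra.
    have := pd_1e p (s := al p) (t := am) Hp st.
    rewrite q1 cs (Hf p p) eqxx mul1r hT.
    have -> : al p ^+ 2 * ((S - am) * am / S) + al p * am * (al p * am / S + al p * am / S) +
         am ^+ 2 * (al p - al p * al p / S) = al p * am * (al p + am) by field.
    by rewrite ltNge (ltW (negprod hp hm)).
  move=> i j; case: (ord_cases i) => [->|[p ->]]; case: (ord_cases j) => [->|[q ->]] => ij.
  - by rewrite eqxx in ij.
  - by rewrite extv_max extv_wid => hm hq; exact: C1 hq hm.
  - by rewrite extv_max extv_wid => hp hm; exact: C1 hp hm.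
  move: ij; rewrite !extv_wid wid_inj => ij hp hq.
  have := @pd_2 _ _ a p q (al q) (- al p) Hp ij (alnz q).
  rewrite !Hf !eqxx (negbTE ij) eq_sym (negbTE ij) /=.
  have -> : al q ^+ 2 * (1 * al p - al p * al p / S) + al q * - al p * (0 * al p - al p * al q / S + (0 * al q - al q * al p / S)) +
      (- al p) ^+ 2 * (1 * al q - al q * al q / S) = al p * al q * (al p + al q) by field.
  by rewrite ltNge (ltW (negprod hp hq)).
have hS : \sum_(i < k.+1) extv al am i = S by rewrite extv_sum -/T /am addrC subrK.
exists (extv al am) => /=.
rewrite hS.
split.
- move=> i; case: (ord_cases i) => [->|[l ->]]; by rewrite ?extv_max ?extv_wid.
- by move=> i j; rewrite !extv_wid Hf.
- have [Sneg|Spos|Seq] := ltgtP S 0; last by rewrite Seq eqxx in S0.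
  right; split => //.
  case: (boolP [exists i, extv al am i < 0]) => [/existsP [i0 hi0]|/existsPn Hn].
    exists i0; split => // j hj; case: (eqVneq j i0) => // ne.
    by case: (NEG2 _ _ ne hj hi0).
  have : 0 <= \sum_(i < k.+1) extv al am i.
    by apply: sumr_ge0 => i _; rewrite leNgt Hn.
  by rewrite hS leNgt Sneg.
left.
have alpos : forall l, 0 < al l.
  move=> l; have := pd_diag l Hp; rewrite Hf eqxx mul1r => h.
  have h2 : 0 <= al l * al l / S by rewrite -expr2; apply: divr_ge0; [exact: sqr_ge0 | exact: ltW].
  case: (ltP 0 (al l)) => // h3; exfalso; lra.
have Tpos : 0 < T.
  rewrite /T (bigD1 (Ordinal k0)) //=; apply: ltr_wpDr; last exact: alpos.
  by apply: sumr_ge0 => i _; exact: ltW.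
have ampos : 0 < am.
  case: (ltP 0 am) => // h.
  have hw : T * am <= 0 by nra.
  have hSi : 0 < S^-1 by rewrite invr_gt0.
  move: q1p; rewrite mulrC mulrA; nra.
move=> i; case: (ord_cases i) => [->|[l ->]]; by rewrite ?extv_max ?extv_wid.
Qed.

Lemma CONV (R : realFieldType) k (a : 'M[R]_k) (g : 'I_k -> R) :
  (0 < k)%N -> posdef_sym a -> condG a g -> cond_a a \/ cond_b a \/ cond_c a.
Proof.
move=> k0 Hp HG.
case: (boolP [exists l, g l == 1]) => [/existsP [l /eqP gl]|/existsPn Hn].
  by right; left; exact: CASEB k0 Hp HG gl.
have g1 : forall l, 1 - g l != 0 by move=> l; rewrite subr_eq0 eq_sym Hn.
have ad : forall l, a l l != 0 by move=> l; rewrite gt_eqF // pd_diag.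
pose al := fun l => a l l / (1 - g l).
have off : forall l j, l != j -> a l j = - g j * al l.
  move=> l j lj; apply: (mulfI (g1 l)); rewrite HG // /al; field; exact: g1.
have alnz : forall l, al l != 0 by move=> l; rewrite /al mulf_neq0 // invr_neq0.
case: (boolP [exists p, g p != 0]) => [/existsP [p gp]|/existsPn Hz].
  right; right.
  pose S := al p / g p.
  have S0 : S != 0 by rewrite /S mulf_neq0 // invr_neq0.
  have rel : forall l, al l = g l * S.
    move=> l; case: (eqVneq l p) => [->|lp]; first by rewrite /S; field.
    have e : - g p * al l = - g l * al p.
      by rewrite -off // -off 1?eq_sym // (pd_sym _ _ Hp).
    rewrite /S; apply: (mulfI gp); move/eqP: e; rewrite !mulNr eqr_opp => /eqP ->.
    by field.
  have gS : forall l, g l = al l / S by move=> l; rewrite rel; field.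
  apply: (CASEC k0 Hp S0 alnz) => i j.
  case: (eqVneq i j) => [->|ij].
    have e1 : a j j = al j * (1 - g j) by rewrite /al; field; exact: g1.
    by rewrite /= mul1r {1}e1 (gS j); ring.
  by rewrite /= mul0r sub0r off // gS; field.
left; split; first by move=> i; exact: pd_diag.
by move=> i j ij; rewrite off // (eqP (negbNE (Hz j))) oppr0 mul0r.
Qed.

Lemma TOG (R : realFieldType) k (a : 'M[R]_k) :
  cond_a a \/ cond_b a \/ cond_c a -> exists g, condG a g.
Proof.
case=> [[_ H]|[[kk [H1 H2 _]]|[al [Hnz Hf Hs]]]].
- by exists (fun=> 0) => l j lj; rewrite H // subr0 oppr0 !mul0r mul1r.
- exists (fun l => (l == kk)%:R) => l j lj.
  case: (eqVneq l kk) => [lk|lk].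
    subst l; rewrite eq_sym (negbTE lj) /= subrr !mul0r oppr0 mul0r //.
  case: (eqVneq j kk) => [jk|jk].
    subst j; rewrite /= subr0 mul1r mulN1r; have [<- _] := H1 l lk; by rewrite opprK.
  by rewrite H2 // mulr0 /= oppr0 mul0r.
- set S := \sum_(i < k.+1) al i.
  have S0 : S != 0.
    case: Hs => [Hp|[_ Sn]]; last by rewrite lt_eqF.
    rewrite gt_eqF // /S big_ord_recr /=; apply: ltr_wpDl; last exact: Hp.
    by apply: sumr_ge0 => i _; exact: ltW.
  exists (fun l => al (wid l) / S) => l j lj.
  rewrite !Hf eqxx (negbTE lj) /= -/S; field; exact: S0.
Qed.

Unset Implicit Arguments.

Theorem mainTheorem2 (R : rcfType) (n k : nat)
    (br : 'rV[R]_n -> 'rV[R]_n -> 'rV[R]_n) (a : 'M[R]_k) :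
  compact_simple_lie br -> (1 <= k)%N -> posdef_sym a ->
  (naturally_reductive br a <-> cond_a a \/ cond_b a \/ cond_c a).
Proof.
move=> Hc k1 Hp.
have Ha : a^T = a by case: Hp.
have Hb : is_lie_bracket br by case: Hc => [[]].
split; last first.
  move=> H; have [g HG] := TOG H; apply: (SUFF (g := g) Hb Ha).
  by apply: G2M => // i; exact: pd_diag.
move=> NR.
case: (ltngtP k 1) => [|k2|k1e]; first by rewrite ltnNge k1.
- have n0 : (0 < n)%N.
    case: Hc => [[_ [[X [Y H0]] _]] _]; rewrite lt0n; apply/negP => /eqP n0.
    move/negP: H0; apply; apply/eqP/rowP => t; exfalso; have := ltn_ord t; by rewrite {2}n0.
  have [th [thL key]] := NEC_theta Hc Ha NR.
  pose i0 : 'I_k := Ordinal (ltnW k2).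
  pose i1 : 'I_k := Ordinal k2.
  have i01 : i0 != i1 by rewrite -val_eqE.
  have Hdet : a i0 i0 * a i1 i1 - a i0 i1 * a i1 i0 != 0.
    have := @pd_2 _ _ a i0 i1 (a i1 i1) (- a i0 i1) Hp i01 (negbT (gt_eqF (pd_diag i1 Hp))).
    rewrite (pd_sym i1 i0 Hp) => h; apply/eqP => h0.
    have e : a i1 i1 ^+ 2 * a i0 i0 + a i1 i1 * - a i0 i1 * (a i0 i1 + a i0 i1) + (- a i0 i1) ^+ 2 * a i1 i1
       = a i1 i1 * (a i0 i0 * a i1 i1 - a i0 i1 * a i0 i1) by ring.
    by move: h; rewrite e h0 mulr0 ltxx.
  have [g HG] := NEC_G n0 i01 (fun i => pd_diag i Hp) Hdet thL key.
  by apply: (CONV _ Hp HG).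
- left; split; first by move=> i; exact: pd_diag.
  move=> i j ij; exfalso; move: ij; subst k.
  by rewrite (ord1 i) (ord1 j) eqxx.
Qed.
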